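(* Let $s,t\in\mathbb{R}$ with $s\ne0$, $t\ne0$, $s^2+4t>0$, and $q=\varphi'_{s,t}/\varphi_{s,t}$. (1) If $\lvert q\rvert<1$, then $\mathrm{Exp}'_{s,t}(z)=\prod_{k=0}^\infty\Big(1+(\varphi_{s,t}-\varphi'_{s,t})\frac{\varphi_{s,t}'^{\,k}}{\varphi_{s,t}^{k+1}}z\Big)$. (2) If $\lvert q\rvert>1$, then on the disk of convergence of its series, $\mathrm{Exp}'_{s,t}(z)=\prod_{k=0}^\infty\frac{\varphi_{s,t}'^{\,k+1}}{\varphi_{s,t}'^{\,k+1}+(\varphi_{s,t}-\varphi'_{s,t})\varphi_{s,t}^{k}z}$, and this product gives the meromorphic continuation of $\mathrm{Exp}'_{s,t}$ to $\mathbb{C}$.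
   Context: $\varphi_{s,t}=\frac{s+\sqrt{s^2+4t}}{2}$, $\varphi'_{s,t}=\frac{s-\sqrt{s^2+4t}}{2}$. Generalized Fibonacci polynomials: $\{0\}_{s,t}=0$, $\{1\}_{s,t}=1$, $\{n+2\}_{s,t}=s\{n+1\}_{s,t}+t\{n\}_{s,t}$; Fibotorial $\{n\}_{s,t}!=\prod_{k=1}^n\{k\}_{s,t}$, $\{0\}_{s,t}!=1$. $\mathrm{Exp}'_{s,t}(z)=\sum_{n=0}^\infty\varphi_{s,t}'^{\,\binom n2}\frac{z^n}{\{n\}_{s,t}!}$. *)

(* Defs.v *)
From Stdlib Require Import Reals.
From Coquelicot Require Import Coquelicot.
Open Scope R_scope.

Definition phi (s t : R) : R := (s + sqrt (s ^ 2 + 4 * t)) / 2.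
Definition phi' (s t : R) : R := (s - sqrt (s ^ 2 + 4 * t)) / 2.

Fixpoint fibp (s t : R) (n : nat) : R :=
  match n with
  | O => 0
  | S m => match m with
           | O => 1
           | S k => s * fibp s t m + t * fibp s t k
           end
  end.

Fixpoint fibtorial (s t : R) (n : nat) : R :=
  match n with
  | O => 1
  | S m => fibtorial s t m * fibp s t (S m)
  end.

Definition binom2 (n : nat) : nat := (n * (n - 1) / 2)%nat.

(* real coefficient of z^n in Exp'_{s,t}(z) *)
Definition expcoef (s t : R) (n : nat) : R :=
  phi' s t ^ binom2 n / fibtorial s t n.

Definition expterm (s t : R) (z : C) (n : nat) : C :=
  Cmult (RtoC (expcoef s t n)) (pow_n (K := C_Ring) z n).

Fixpoint cprod (f : nat -> C) (N : nat) : C :=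
  match N with
  | O => RtoC 1
  | S m => Cmult (cprod f m) (f m)
  end.

Definition is_inf_prod (f : nat -> C) (L : C) : Prop :=
  filterlim (cprod f) eventually (locally (T := C_UniformSpace) L).

Definition factor1 (s t : R) (z : C) (k : nat) : C :=
  Cplus (RtoC 1)
    (Cmult (RtoC ((phi s t - phi' s t) * phi' s t ^ k / phi s t ^ (S k))) z).

Definition factor2 (s t : R) (z : C) (k : nat) : C :=
  Cdiv (RtoC (phi' s t ^ (S k)))
    (Cplus (RtoC (phi' s t ^ (S k)))
           (Cmult (RtoC ((phi s t - phi' s t) * phi s t ^ k)) z)).

(* the zeros of the denominators of part (2): candidate poles *)
Definition pole2 (s t : R) (k : nat) : C :=
  RtoC (- (phi' s t ^ (S k)) / ((phi s t - phi' s t) * phi s t ^ k)).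

(* Main.v *)
Require Import Defs.
From Stdlib Require Import Reals Lra Lia ClassicalEpsilon.
From Coquelicot Require Import Coquelicot.
Open Scope R_scope.

Lemma Cnorm_eq (x : C) : norm (K := C_AbsRing) (V := C_NormedModule) x = Cmod x.
Proof. reflexivity. Qed.

Lemma Cminus_eq (x y : C) : minus (G := C_AbelianGroup) x y = Cminus x y.
Proof. reflexivity. Qed.

Lemma Cmod_sub_sym (x y : C) : Cmod (x - y)%C = Cmod (y - x)%C.
Proof.
  replace (y - x)%C with (- (x - y))%C by ring. unfold Cmod. f_equal.
  destruct x, y; simpl; ring.
Qed.

Lemma Cmod_opp (x : C) : Cmod (- x)%C = Cmod x.
Proof. unfold Cmod. f_equal. destruct x; simpl; ring. Qed.

Lemma Cmod_rev_tri (x y : C) : Cmod x - Cmod y <= Cmod (x - y)%C.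
Proof.
  assert (H := Cmod_triangle (x - y)%C y).
  replace (x - y + y)%C with x in H by ring. lra.
Qed.

Lemma Cinv_0 : Cinv 0 = 0.
Proof. unfold Cinv; simpl. apply injective_projections; simpl; ring_simplify; unfold Rdiv; rewrite ?Rmult_0_l; try ring.
Qed.

Lemma Cmult_eq0 (x y : C) : (x * y)%C = 0 -> x = 0 \/ y = 0.
Proof.
  intro H. assert (Cmod x * Cmod y = 0) by (rewrite <- Cmod_mult, H; apply Cmod_0).
  destruct (Rmult_integral _ _ H0); [left|right]; now apply Cmod_eq_0.
Qed.

Lemma Cinv_mult (x y : C) : Cinv (x * y)%C = (Cinv x * Cinv y)%C.
Proof.
  destruct (Ceq_dec x 0) as [->|Hx]. { rewrite Cmult_0_l, Cinv_0; ring. }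
  destruct (Ceq_dec y 0) as [->|Hy]. { rewrite Cmult_0_r, Cinv_0; ring. }
  field. split; auto.
Qed.

Lemma Cmod_pos_ne (x : C) : x <> 0 -> 0 < Cmod x.
Proof. intro; now apply Cmod_gt_0. Qed.

Lemma Clim_intro {T} (F : (T -> Prop) -> Prop) (FF : Filter F) (u : T -> C) (L : C) :
  (forall eps : R, 0 < eps -> F (fun x => Cmod (u x - L)%C < eps)) ->
  filterlim u F (locally (T := C_UniformSpace) L).
Proof.
  intro H. apply (filterlim_locally_ball_norm (K := C_AbsRing) (U := C_NormedModule)).
  intro eps. apply (H eps (cond_pos eps)).
Qed.

Lemma Clim_elim {T} (F : (T -> Prop) -> Prop) (FF : Filter F) (u : T -> C) (L : C) :
  filterlim u F (locally (T := C_UniformSpace) L) ->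
  (forall eps : R, 0 < eps -> F (fun x => Cmod (u x - L)%C < eps)).
Proof.
  intros H eps He.
  apply (filterlim_locally_ball_norm (K := C_AbsRing) (U := C_NormedModule)) with (eps := mkposreal _ He) in H.
  exact H.
Qed.

Lemma Clim_unique (u : nat -> C) L1 L2 :
  filterlim u eventually (locally (T := C_UniformSpace) L1) ->
  filterlim u eventually (locally (T := C_UniformSpace) L2) -> L1 = L2.
Proof.
  intros H1 H2. destruct (Ceq_dec L1 L2) as [|Hne]; auto. exfalso.
  assert (Hp := Cmod_pos_ne (L1 - L2)%C ltac:(intro E; apply Hne; 
     replace L1 with ((L1 - L2) + L2)%C by ring; rewrite E; ring)).
  destruct (Clim_elim _ _ _ _ H1 _ ltac:(apply (Rdiv_lt_0_compat _ 2 Hp); lra)) as [N1 HN1].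
  destruct (Clim_elim _ _ _ _ H2 _ ltac:(apply (Rdiv_lt_0_compat _ 2 Hp); lra)) as [N2 HN2].
  specialize (HN1 (N1 + N2)%nat ltac:(lia)). specialize (HN2 (N1 + N2)%nat ltac:(lia)).
  assert (T := Cmod_triangle (L1 - u (N1 + N2)%nat)%C (u (N1 + N2)%nat - L2)%C).
  replace (L1 - u (N1 + N2)%nat + (u (N1 + N2)%nat - L2))%C with (L1 - L2)%C in T by ring.
  rewrite (Cmod_sub_sym L1 (u (N1 + N2)%nat)) in T. lra.
Qed.

Definition CS (a : nat -> C) (L : C) := is_series (K := C_AbsRing) (V := C_NormedModule) a L.
Definition Csum (a : nat -> C) : C := epsilon (inhabits (RtoC 0)) (CS a).

Lemma Csum_spec a : (exists L, CS a L) -> CS a (Csum a).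
Proof. intro H. unfold Csum. apply epsilon_spec. exact H. Qed.

Lemma CS_unique a L1 L2 : CS a L1 -> CS a L2 -> L1 = L2.
Proof. unfold CS, is_series. apply Clim_unique. Qed.

Lemma Cpartial_bound (a : nat -> C) (c : nat -> R) :
  (forall n, Cmod (a n) <= c n) -> forall N,
  Cmod (sum_n (G := C_AbelianMonoid) a N) <= sum_n (G := R_AbelianMonoid) c N.
Proof.
  intros H N. induction N.
  - rewrite !sum_O. apply H.
  - rewrite !sum_Sn. eapply Rle_trans. apply Cmod_triangle.
    change (plus (sum_n c N) (c (S N))) with (sum_n c N + c (S N)). specialize (H (S N)). lra.
Qed.

Lemma Rseries_eps (c : nat -> R) M : is_series (K := R_AbsRing) (V := R_NormedModule) c M ->
  forall eps, 0 < eps -> exists N, forall n, (N <= n)%nat -> Rabs (sum_n (G := R_AbelianMonoid) c n - M) < eps.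
Proof.
  intros H eps He.
  apply (filterlim_locally_ball_norm (K := R_AbsRing) (U := R_NormedModule)) with (eps := mkposreal _ He) in H.
  exact H.
Qed.

Lemma CS_bound (a : nat -> C) L (c : nat -> R) M :
  CS a L -> is_series (K := R_AbsRing) (V := R_NormedModule) c M ->
  (forall n, Cmod (a n) <= c n) -> Cmod L <= M.
Proof.
  intros Ha Hc Hb.
  apply Rnot_lt_le. intro Hlt. set (eps := (Cmod L - M)/3).
  assert (He : 0 < eps) by (unfold eps; lra).
  destruct (Clim_elim _ _ _ _ Ha eps He) as [N1 HN1].
  destruct (Rseries_eps c M Hc eps He) as [N2 HN2].
  specialize (HN1 (N1 + N2)%nat ltac:(lia)). specialize (HN2 (N1 + N2)%nat ltac:(lia)).
  assert (B := Cpartial_bound a c Hb (N1 + N2)%nat).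
  assert (T := Cmod_rev_tri L (sum_n a (N1 + N2))).
  rewrite Cmod_sub_sym in T.
  set (S0 := sum_n a (N1 + N2)) in *. set (S1 := sum_n c (N1 + N2)) in *.
  assert (HN1' : Cmod (S0 - L) < eps) by exact HN1.
  assert (HN2' : Rabs (S1 - M) < eps) by exact HN2.
  apply Rabs_def2 in HN2'. unfold eps in *. lra.
Qed.

Lemma pow_n_Cpow (z : C) n : pow_n (K := C_Ring) z n = Cpow z n.
Proof. induction n; simpl; auto. Qed.

Lemma CS_ex_le (a : nat -> C) (c : nat -> R) :
  (forall n, Cmod (a n) <= c n) -> ex_series (K := R_AbsRing) (V := R_NormedModule) c -> exists L, CS a L.
Proof.
  intros H Hc. exact (ex_series_le (K := C_AbsRing) (V := C_CompleteNormedModule) a c H Hc).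
Qed.

Lemma CS_ext a b L : (forall n, a n = b n) -> CS a L -> CS b L.
Proof. apply is_series_ext. Qed.

Lemma CS_plus a b La Lb : CS a La -> CS b Lb -> CS (fun n => a n + b n)%C (La + Lb)%C.
Proof. apply (is_series_plus (K := C_AbsRing) (V := C_NormedModule)). Qed.

Lemma CS_scal (k : C) a L : CS a L -> CS (fun n => k * a n)%C (k * L)%C.
Proof. apply (is_series_scal (K := C_AbsRing) (V := C_NormedModule)). Qed.

Lemma CS_opp a L : CS a L -> CS (fun n => - a n)%C (- L)%C.
Proof.
  intro H. apply (CS_ext (fun n => (-1) * a n)%C). intro; ring.
  replace (-L)%C with ((-1) * L)%C by ring. now apply CS_scal.
Qed.

Lemma CS_minus a b La Lb : CS a La -> CS b Lb -> CS (fun n => a n - b n)%C (La - Lb)%C.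
Proof. intros. apply CS_plus; auto. now apply CS_opp. Qed.

Lemma Rseries_correct (c : nat -> R) : ex_series c -> is_series (K := R_AbsRing) (V := R_NormedModule) c (Series c).
Proof. apply Series_correct. Qed.

Lemma INR_le_pow2 n : INR n <= 2 ^ n.
Proof.
  induction n. simpl; lra. rewrite S_INR. simpl.
  assert (1 <= 2 ^ n) by (apply pow_R1_Rle; lra). lra.
Qed.

Lemma Rpow_le_mono (a b : R) n : 0 <= a <= b -> a ^ n <= b ^ n.
Proof. intros [H1 H2]. apply pow_incr; auto. Qed.

Lemma pow_R_ge1 (R : R) n m : 1 <= R -> (n <= m)%nat -> R ^ n <= R ^ m.
Proof. intros. apply Rle_pow; auto. Qed.

Definition Entire (a : nat -> C) := forall R, 0 <= R -> ex_series (fun n => Cmod (a n) * R ^ n).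
Definition PSC (a : nat -> C) (x : C) : C := Csum (fun n => a n * Cpow x n)%C.

Lemma PSC_spec a x : Entire a -> CS (fun n => a n * Cpow x n)%C (PSC a x).
Proof.
  intro Ha. apply Csum_spec. apply CS_ex_le with (c := fun n => Cmod (a n) * Cmod x ^ n).
  - intro n. rewrite Cmod_mult, Cmod_pow. lra.
  - apply Ha, Cmod_ge_0.
Qed.

Lemma Entire_n2 a : Entire a -> forall R, 0 <= R -> ex_series (fun n => Cmod (a n) * (INR n ^ 2 * R ^ n)).
Proof.
  intros Ha R HR. apply (ex_series_le (K := R_AbsRing) (V := R_CompleteNormedModule)) with (b := fun n => Cmod (a n) * (4 * R) ^ n).
  - intro n. change (norm _) with (Rabs (Cmod (a n) * (INR n ^ 2 * R ^ n))).
    assert (0 <= Cmod (a n)) by apply Cmod_ge_0.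
    assert (0 <= R ^ n) by (apply pow_le; auto).
    assert (0 <= INR n) by apply pos_INR.
    rewrite Rabs_pos_eq by (apply Rmult_le_pos; auto; apply Rmult_le_pos; auto; apply pow_le; auto).
    apply Rmult_le_compat_l; auto. rewrite Rpow_mult_distr. apply Rmult_le_compat_r; auto.
    replace 4 with (2 * 2) by lra. rewrite Rpow_mult_distr.
    assert (H2 := INR_le_pow2 n). simpl. rewrite Rmult_1_r. apply Rmult_le_compat; auto.
  - apply Ha. lra.
Qed.

Definition dpow (x : C) (n : nat) : C :=
  match n with O => RtoC 0 | S m => (RtoC (INR (S m)) * Cpow x m)%C end.

Definition epow (x y : C) (n : nat) : C := (Cpow y n - Cpow x n - (y - x) * dpow x n)%C.

Lemma epow_S x y n : epow x y (S n) = (y * epow x y n + (y - x) * (y - x) * dpow x n)%C.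
Proof.
  unfold epow. destruct n.
  - simpl. ring.
  - change (dpow x (S (S n))) with (RtoC (INR (S (S n))) * Cpow x (S n))%C.
    change (dpow x (S n)) with (RtoC (INR (S n)) * Cpow x n)%C.
    rewrite (S_INR (S n)), RtoC_plus. simpl Cpow. ring.
Qed.

Lemma dpow_bound x R n : 1 <= R -> Cmod x <= R -> Cmod (dpow x n) <= INR n * R ^ n.
Proof.
  intros HR Hx. destruct n.
  - simpl. rewrite Cmod_0. lra.
  - change (dpow x (S n)) with (RtoC (INR (S n)) * Cpow x n)%C. rewrite Cmod_mult, Cmod_R, Cmod_pow, Rabs_pos_eq by apply pos_INR.
    apply Rmult_le_compat_l. apply pos_INR.
    apply Rle_trans with (R ^ n). apply Rpow_le_mono. split; auto; apply Cmod_ge_0.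
    apply pow_R_ge1; auto.
Qed.

Lemma epow_bound x y R n : 1 <= R -> Cmod x <= R -> Cmod y <= R ->
  Cmod (epow x y n) <= INR n ^ 2 * (Cmod (y - x) ^ 2 * R ^ n).
Proof.
  intros HR Hx Hy. induction n.
  - unfold epow. simpl. replace (1 - 1 - (y - x) * 0)%C with (RtoC 0) by ring. rewrite Cmod_0. lra.
  - rewrite epow_S. eapply Rle_trans. apply Cmod_triangle.
    rewrite !Cmod_mult.
    assert (Hd := dpow_bound x R n HR Hx).
    set (h := Cmod (y - x)) in *. set (e := Cmod (epow x y n)) in *.
    assert (0 <= h) by apply Cmod_ge_0. assert (0 <= e) by apply Cmod_ge_0.
    assert (0 <= Cmod y) by apply Cmod_ge_0.
    assert (0 <= INR n) by apply pos_INR.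
    assert (0 <= R ^ n) by (apply pow_le; lra).
    rewrite S_INR. simpl pow. 
    assert (Cmod y * e <= R * (INR n ^ 2 * (h ^ 2 * R ^ n))).
    { apply Rmult_le_compat; auto. }
    assert (h * h * Cmod (dpow x n) <= h * h * (INR n * R ^ n)).
    { apply Rmult_le_compat_l; auto. apply Rmult_le_pos; auto. }
    assert (R ^ n <= R * R ^ n) by (rewrite <- (Rmult_1_l (R ^ n)) at 1; apply Rmult_le_compat_r; lra).
    assert (0 <= h * h * INR n) by (apply Rmult_le_pos; auto; apply Rmult_le_pos; auto).
    assert (h * h * INR n * R ^ n <= h * h * INR n * (R * R ^ n)) by (apply Rmult_le_compat_l; auto).
    simpl in H4. nra.
Qed.

Lemma PSC_derive a x : Entire a -> is_derive (K := C_AbsRing) (V := C_NormedModule) (PSC a) x (Csum (fun n => a n * dpow x n)%C).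
Proof.
  intro Ha. set (R := Cmod x + 1).
  assert (HR : 1 <= R) by (unfold R; assert (0 <= Cmod x) by apply Cmod_ge_0; lra).
  set (c := fun n => Cmod (a n) * (INR n ^ 2 * R ^ n)).
  assert (Hc : ex_series c) by (apply Entire_n2; auto; lra).
  set (M := Series c).
  assert (HD : CS (fun n => a n * dpow x n)%C (Csum (fun n => a n * dpow x n)%C)).
  { apply Csum_spec. apply CS_ex_le with (c := c); auto.
    intro n. unfold c. rewrite Cmod_mult. apply Rmult_le_compat_l. apply Cmod_ge_0.
    eapply Rle_trans. apply (dpow_bound x R); auto. unfold R; lra.
    apply Rmult_le_compat_r. apply pow_le; lra.
    destruct n. simpl; lra. assert (1 <= INR (S n)) by (apply (le_INR 1); lia). set (m := INR (S n)) in *. simpl pow. nra. }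
  set (D := Csum _) in *.
  split. apply is_linear_scal_l.
  intros x' Hx'. apply (is_filter_lim_locally_unique (K := C_AbsRing) (V := AbsRing_NormedModule C_AbsRing)) in Hx'. subst x'.
  intro eps.
  set (del := Rmin 1 (eps / (Rabs M + 1))).
  assert (Hdel : 0 < del).
  { unfold del. apply Rmin_pos. lra. apply Rdiv_lt_0_compat. apply cond_pos.
    assert (0 <= Rabs M) by apply Rabs_pos. lra. }
  exists (mkposreal _ Hdel). intros y Hy. change C in y.
  change (Cmod (y - x) < del) in Hy.
  change (Cmod (PSC a y - PSC a x - (y - x) * D)%C <= eps * Cmod (y - x)).
  set (h := Cmod (y - x)) in *.
  assert (Hyr : Cmod y <= R).
  { assert (T := Cmod_triangle (y - x) x). replace (y - x + x)%C with y in T by ring.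
    fold h in T. assert (del <= 1) by apply Rmin_l. unfold R; lra. }
  assert (Hser : CS (fun n => a n * epow x y n)%C (PSC a y - PSC a x - (y - x) * D)%C).
  { apply CS_ext with (a := fun n => (a n * Cpow y n - a n * Cpow x n - (y - x) * (a n * dpow x n))%C).
    intro n; unfold epow; ring.
    apply CS_minus. apply CS_minus; apply PSC_spec; auto. apply CS_scal; auto. }
  assert (Hb : Cmod (PSC a y - PSC a x - (y - x) * D)%C <= h ^ 2 * M).
  { apply CS_bound with (1 := Hser) (c := fun n => h ^ 2 * c n).
    apply (is_series_scal (K := R_AbsRing) (V := R_NormedModule)). apply Rseries_correct; auto.
    intro n. rewrite Cmod_mult. unfold c.
    assert (T := epow_bound x y R n HR ltac:(unfold R; lra) Hyr). fold h in T.
    assert (0 <= Cmod (a n)) by apply Cmod_ge_0.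
    eapply Rle_trans. apply Rmult_le_compat_l; eauto. right; ring. }
  eapply Rle_trans. apply Hb.
  assert (0 <= h) by apply Cmod_ge_0.
  assert (h * Rabs M <= eps).
  { assert (del <= eps / (Rabs M + 1)) by apply Rmin_r.
    assert (0 <= Rabs M) by apply Rabs_pos.
    assert (h * (Rabs M + 1) <= eps).
    { apply Rle_trans with (del * (Rabs M + 1)). apply Rmult_le_compat_r; lra.
      apply Rle_trans with (eps / (Rabs M + 1) * (Rabs M + 1)). apply Rmult_le_compat_r; lra.
      right; field; lra. }
    nra. }
  assert (M <= Rabs M) by apply Rle_abs.
  nra.
Qed.

Lemma Cinv_derive (a : C) : a <> 0 ->
  is_derive (K := C_AbsRing) (V := C_NormedModule) Cinv a (- Cinv (a * a))%C.
Proof.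
  intro Ha. assert (Hm := Cmod_pos_ne a Ha). set (m := Cmod a) in *.
  split. apply is_linear_scal_l.
  intros x' Hx'. apply (is_filter_lim_locally_unique (K := C_AbsRing) (V := AbsRing_NormedModule C_AbsRing)) in Hx'. subst x'.
  intro eps.
  assert (He := cond_pos eps).
  set (del := Rmin (m / 2) (eps * (m * m * m) / 2)).
  assert (Hdel : 0 < del) by (unfold del; apply Rmin_pos; [lra | apply Rdiv_lt_0_compat; [apply Rmult_lt_0_compat; auto; apply Rmult_lt_0_compat; [apply Rmult_lt_0_compat|]; auto | lra]]).
  exists (mkposreal _ Hdel). intros y Hy. change C in y.
  change (Cmod (y - a) < del) in Hy.
  change (Cmod (Cinv y - Cinv a - (y - a) * (- Cinv (a * a)))%C <= eps * Cmod (y - a)).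
  set (h := Cmod (y - a)) in *.
  assert (Hd1 : del <= m / 2) by apply Rmin_l.
  assert (Hd2 : del <= eps * (m * m * m) / 2) by apply Rmin_r.
  assert (Hy0 : m / 2 <= Cmod y).
  { assert (T := Cmod_rev_tri a y). rewrite Cmod_sub_sym in T. fold h in T. fold m in T. lra. }
  assert (Hyn : y <> 0). { intro E. rewrite E, Cmod_0 in Hy0. lra. }
  replace (Cinv y - Cinv a - (y - a) * - Cinv (a * a))%C with ((y - a) * (y - a) * Cinv (y * a * a))%C.
  2:{ field. split; auto. }
  rewrite !Cmod_mult, Cmod_inv, !Cmod_mult. 2:{ intro E. apply Cmult_eq0 in E. destruct E as [E|E]; [apply Cmult_eq0 in E; destruct E|]; auto. }
  fold h m.
  assert (0 <= h) by apply Cmod_ge_0.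
  apply Rle_trans with (h * h * / (m / 2 * m * m)).
  { apply Rmult_le_compat_l. nra. apply Rinv_le_contravar. nra.
    apply Rmult_le_compat_r. lra. apply Rmult_le_compat_r; lra. }
  apply Rle_trans with (h * (eps * (m * m * m) / 2) * / (m / 2 * m * m)).
  { apply Rmult_le_compat_r. left; apply Rinv_0_lt_compat; nra. apply Rmult_le_compat_l; lra. }
  right. field. lra.
Qed.

Definition Ccont (f : C -> C) (x : C) := forall eps, 0 < eps ->
  exists del, 0 < del /\ forall y, Cmod (y - x)%C < del -> Cmod (f y - f x)%C < eps.

Lemma deriv_Ccont f x l : is_derive (K := C_AbsRing) (V := C_NormedModule) f x l -> Ccont f x.
Proof.
  intros Hd eps He.
  assert (Hc := ex_derive_continuous (K := C_AbsRing) (V := C_NormedModule) f x (ex_intro _ l Hd)).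
  destruct (Clim_elim _ _ _ _ Hc eps He) as [del Hdel].
  exists del. split. apply cond_pos. intros y Hy. apply Hdel. exact Hy.
Qed.

Lemma Ccont_seq f x (v : nat -> C) : Ccont f x ->
  filterlim v eventually (locally (T := C_UniformSpace) x) ->
  filterlim (fun n => f (v n)) eventually (locally (T := C_UniformSpace) (f x)).
Proof.
  intros Hc Hv. apply Clim_intro. apply eventually_filter. intros eps He.
  destruct (Hc eps He) as [del [Hdel H]].
  destruct (Clim_elim _ _ _ _ Hv del Hdel) as [N HN].
  exists N. intros n Hn. apply H. apply HN, Hn.
Qed.


Lemma geom_small (q c d : R) : Rabs q < 1 -> 0 < d -> 0 <= c ->
  exists N, forall n, (N <= n)%nat -> Rabs q ^ n * c < d.
Proof.
  intros Hq Hd Hc. destruct (pow_lt_1_zero (Rabs q) ltac:(rewrite Rabs_Rabsolu; auto) (d / (c + 1)))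
    as [N HN]. apply Rdiv_lt_0_compat; lra.
  exists N. intros n Hn. specialize (HN n Hn). rewrite Rabs_pos_eq in HN by (apply pow_le, Rabs_pos).
  assert (0 <= Rabs q ^ n) by (apply pow_le, Rabs_pos).
  apply Rle_lt_trans with (Rabs q ^ n * (c + 1)). apply Rmult_le_compat_l; lra.
  apply Rlt_le_trans with (d / (c + 1) * (c + 1)). apply Rmult_lt_compat_r; lra.
  right; field; lra.
Qed.

Lemma PS_small (b : nat -> C) r L y : 0 < r -> ex_series (fun n => Cmod (b n) * r ^ n) ->
  CS (fun n => b n * Cpow y n)%C L -> Cmod y <= r ->
  Cmod (L - b O)%C <= Cmod y / r * Series (fun n => Cmod (b (S n)) * r ^ (S n)).
Proof.
  intros Hr Hb HL Hy.
  assert (H1 : CS (fun n => b (S n) * Cpow y (S n))%C (L - b O)%C).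
  { apply (is_series_incr_1 (K := C_AbsRing) (V := C_NormedModule) (fun n => b n * Cpow y n)%C).
    match goal with |- is_series _ ?X => replace X with L; [exact HL|] end.
    change (L = Cplus (L - b O)%C (b O * 1)%C). ring. }
  apply CS_bound with (1 := H1) (c := fun n => Cmod y / r * (Cmod (b (S n)) * r ^ (S n))).
  - apply (is_series_scal (K := R_AbsRing) (V := R_NormedModule)). apply Rseries_correct.
    apply (ex_series_incr_1 (K := R_AbsRing) (V := R_NormedModule) (fun n => Cmod (b n) * r ^ n)). auto.
  - intro n. rewrite Cmod_mult, Cmod_pow. simpl pow.
    assert (0 <= Cmod (b (S n))) by apply Cmod_ge_0.
    assert (0 <= Cmod y) by apply Cmod_ge_0.
    assert (Cmod y ^ n <= r ^ n) by (apply Rpow_le_mono; lra).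
    assert (0 <= Cmod y ^ n) by (apply pow_le; lra).
    replace (Cmod y / r * (Cmod (b (S n)) * (r * r ^ n))) with (Cmod (b (S n)) * (Cmod y * r ^ n)) by (field; lra).
    apply Rmult_le_compat_l; auto. apply Rmult_le_compat_l; auto.
Qed.

Lemma PS_lim0 (b : nat -> C) r (f : C -> C) : 0 < r -> ex_series (fun n => Cmod (b n) * r ^ n) ->
  (forall y, Cmod y <= r -> CS (fun n => b n * Cpow y n)%C (f y)) ->
  forall (q : R) (x : C), Rabs q < 1 ->
  filterlim (fun N => f (RtoC (q ^ N) * x)%C) eventually (locally (T := C_UniformSpace) (b O)).
Proof.
  intros Hr Hb Hf q x Hq. apply Clim_intro. apply eventually_filter.
  intros eps He. set (K := Series (fun n => Cmod (b (S n)) * r ^ (S n))).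
  destruct (geom_small q (Cmod x) (Rmin r (eps * r / (Rabs K + 1))) Hq) as [N HN].
  { apply Rmin_pos; auto. apply Rdiv_lt_0_compat. nra. assert (0 <= Rabs K) by apply Rabs_pos. lra. }
  apply Cmod_ge_0.
  exists N. intros n Hn. specialize (HN n Hn).
  assert (Hy : Cmod (RtoC (q ^ n) * x)%C = Rabs q ^ n * Cmod x).
  { rewrite Cmod_mult, Cmod_R, RPow_abs. auto. }
  assert (Hm1 := Rmin_l r (eps * r / (Rabs K + 1))).
  assert (Hm2 := Rmin_r r (eps * r / (Rabs K + 1))).
  assert (Hyr : Cmod (RtoC (q ^ n) * x)%C <= r) by lra.
  eapply Rle_lt_trans. apply (PS_small b r); auto.
  fold K. set (u := Cmod (RtoC (q ^ n) * x)%C) in *.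
  assert (0 <= u) by apply Cmod_ge_0. assert (0 <= Rabs K) by apply Rabs_pos.
  assert (K <= Rabs K) by apply Rle_abs.
  apply Rle_lt_trans with (u / r * Rabs K).
  { apply Rmult_le_compat_l; auto. apply Rdiv_le_0_compat; lra. }
  assert (u * (Rabs K + 1) < eps * r).
  { apply Rlt_le_trans with (eps * r / (Rabs K + 1) * (Rabs K + 1)). apply Rmult_lt_compat_r; lra.
    right; field; lra. }
  apply Rmult_lt_reg_r with r; auto. replace (u / r * Rabs K * r) with (u * Rabs K) by (field; lra). nra.
Qed.

Fixpoint Aq (q : R) (n : nat) : R :=
  match n with O => 1 | S m => Aq q m * q ^ m / (1 - q ^ (S m)) end.
Fixpoint Bq (q : R) (n : nat) : R :=
  match n with O => 1 | S m => Bq q m / (1 - q ^ (S m)) end.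

Lemma pow_abs_lt1 q n : Rabs q < 1 -> Rabs (q ^ (S n)) < 1.
Proof.
  intro Hq. rewrite <- RPow_abs. simpl.
  assert (Rabs q ^ n <= 1) by (rewrite <- (pow1 n); apply pow_incr; split; [apply Rabs_pos | lra]).
  assert (0 <= Rabs q) by apply Rabs_pos. nra.
Qed.

Lemma one_minus_pow_ne q n : Rabs q < 1 -> 1 - q ^ (S n) <> 0.
Proof.
  intros Hq E. assert (Rabs (q ^ S n) < 1) by (apply pow_abs_lt1; auto).
  replace (q ^ S n) with 1 in H by lra. rewrite Rabs_R1 in H. lra.
Qed.

Lemma Aq_ne q n : Rabs q < 1 -> q <> 0 -> Aq q n <> 0.
Proof.
  intros Hq Hq0. induction n; simpl. lra.
  apply Rmult_integral_contrapositive_currified. apply Rmult_integral_contrapositive_currified; auto.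
  apply pow_nonzero; auto. apply Rinv_neq_0_compat. apply (one_minus_pow_ne q n Hq).
Qed.

Lemma Bq_ne q n : Rabs q < 1 -> Bq q n <> 0.
Proof.
  intros Hq. induction n; simpl. lra.
  apply Rmult_integral_contrapositive_currified; auto.
  apply Rinv_neq_0_compat. apply (one_minus_pow_ne q n Hq).
Qed.

Lemma lim_one_minus q : Rabs q < 1 -> is_lim_seq (fun n => Rabs (1 - q ^ (S n))) 1.
Proof.
  intro Hq. replace (Finite 1) with (Rbar_abs (Finite (1 - 0))) by (simpl; f_equal; rewrite Rminus_0_r, Rabs_R1; auto).
  apply is_lim_seq_abs. apply is_lim_seq_minus'. apply is_lim_seq_const.
  apply (is_lim_seq_incr_1 (fun n => q ^ n)). now apply is_lim_seq_geom.
Qed.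

Lemma dal_helper (a : nat -> R) (r k : R) : 0 < r -> k < 1 -> (forall n, a n <> 0) ->
  is_lim_seq (fun n => Rabs (a (S n)) / Rabs (a n) * r) k ->
  forall r0, 0 <= r0 <= r -> ex_series (fun n => Cmod (RtoC (a n)) * r0 ^ n).
Proof.
  intros Hr Hk Ha Hl r0 Hr0.
  assert (HD : ex_series (fun n => Rabs (a n * r ^ n))).
  { apply ex_series_DAlembert with k; auto.
    intro n. apply Rmult_integral_contrapositive_currified; auto. apply pow_nonzero; lra.
    eapply is_lim_seq_ext; [|apply Hl]. intro n. simpl.
    rewrite Rabs_div. rewrite !Rabs_mult. rewrite (Rabs_pos_eq r) by lra.
    field. split. apply Rgt_not_eq, Rlt_gt, Rabs_pos_lt. apply pow_nonzero. lra.
    apply Rgt_not_eq, Rlt_gt. apply Rabs_pos_lt. auto.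
    apply Rmult_integral_contrapositive_currified; auto. apply pow_nonzero; lra. }
  apply (ex_series_le (K := R_AbsRing) (V := R_CompleteNormedModule)) with (2 := HD).
  intro n. change (norm _) with (Rabs (Cmod (RtoC (a n)) * r0 ^ n)). rewrite Cmod_R.
  rewrite Rabs_mult, Rabs_Rabsolu, Rabs_mult. apply Rmult_le_compat_l. apply Rabs_pos.
  rewrite !Rabs_pos_eq by (apply pow_le; lra). apply Rpow_le_mono; lra.
Qed.

Lemma Aq_entire q : Rabs q < 1 -> q <> 0 -> Entire (fun n => RtoC (Aq q n)).
Proof.
  intros Hq Hq0 R HR. apply dal_helper with (r := R + 1) (k := 0); try lra.
  intro; apply Aq_ne; auto.
  apply is_lim_seq_ext with (fun n => Rabs q ^ n / Rabs (1 - q ^ (S n)) * (R + 1)).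
  { intro n. assert (E1 := one_minus_pow_ne q n Hq). assert (E2 := Aq_ne q n Hq Hq0).
    simpl Aq. simpl pow in *. unfold Rdiv. rewrite !Rabs_mult, !Rabs_inv, RPow_abs. field.
    split; apply Rgt_not_eq, Rlt_gt, Rabs_pos_lt; auto. }
  replace (Finite 0) with (Rbar_mult (Finite (0 / 1)) (R + 1)) by (simpl; f_equal; field).
  apply is_lim_seq_scal_r. apply is_lim_seq_div'. apply is_lim_seq_geom. rewrite Rabs_Rabsolu; auto.
  apply lim_one_minus; auto. lra.
Qed.

Lemma Bq_conv q r : Rabs q < 1 -> 0 <= r < 1 -> ex_series (fun n => Cmod (RtoC (Bq q n)) * r ^ n).
Proof.
  intros Hq Hr. apply dal_helper with (r := (r + 1) / 2) (k := (r + 1) / 2); try lra.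
  intro; apply Bq_ne; auto.
  apply is_lim_seq_ext with (fun n => 1 / Rabs (1 - q ^ (S n)) * ((r + 1) / 2)).
  { intro n. assert (E1 := one_minus_pow_ne q n Hq). assert (E2 := Bq_ne q n Hq).
    simpl Bq. simpl pow in *. unfold Rdiv. rewrite !Rabs_mult, !Rabs_inv. field.
    split; apply Rgt_not_eq, Rlt_gt, Rabs_pos_lt; auto. }
  replace (Finite ((r + 1) / 2)) with (Rbar_mult (Finite (1 / 1)) ((r + 1) / 2)) by (simpl; f_equal; field).
  apply is_lim_seq_scal_r. apply is_lim_seq_div'. apply is_lim_seq_const.
  apply lim_one_minus; auto. lra.
Qed.

Lemma cprod_ext f g N : (forall k, f k = g k) -> cprod f N = cprod g N.
Proof. intro H. induction N; simpl; auto. rewrite IHN, H. auto. Qed.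

Lemma cprod_zero f N : cprod f N = 0 -> exists k, (k < N)%nat /\ f k = 0.
Proof.
  induction N; simpl; intro H.
  - exfalso. injection H. lra.
  - apply Cmult_eq0 in H. destruct H as [H|H].
    + destruct (IHN H) as [k [Hk Hf]]. exists k. split; auto.
    + exists N. split; auto.
Qed.

Lemma cprod_inv f N : cprod (fun k => Cinv (f k)) N = Cinv (cprod f N).
Proof.
  induction N; simpl.
  - apply injective_projections; simpl; field_simplify; try lra; auto.
  - rewrite IHN, Cinv_mult. auto.
Qed.

Section Euler.
Variable q : R.
Hypothesis Hq : Rabs q < 1.
Hypothesis Hq0 : q <> 0.

Definition ES (x : C) : C := PSC (fun n => RtoC (Aq q n)) x.
Definition TS (x : C) : C := Csum (fun n => RtoC (Bq q n) * Cpow x n)%C.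

Lemma ES_spec x : CS (fun n => RtoC (Aq q n) * Cpow x n)%C (ES x).
Proof. apply PSC_spec, Aq_entire; auto. Qed.

Lemma TS_spec x : Cmod x < 1 -> CS (fun n => RtoC (Bq q n) * Cpow x n)%C (TS x).
Proof.
  intro Hx. apply Csum_spec. apply CS_ex_le with (c := fun n => Cmod (RtoC (Bq q n)) * Cmod x ^ n).
  - intro n. rewrite Cmod_mult, Cmod_pow. lra.
  - apply Bq_conv; auto. split; auto. apply Cmod_ge_0.
Qed.

Lemma CS_shift (u : nat -> C) L :
  CS u L -> CS (fun n => match n with O => RtoC 0 | S m => u m end) L.
Proof.
  intro H. apply (is_series_decr_1 (K := C_AbsRing) (V := C_NormedModule)).
  match goal with |- is_series _ ?X => replace X with L; [exact H|] end.
  change (L = Cplus L (Copp (RtoC 0))). ring.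
Qed.

Lemma Aq_rec m : Aq q (S m) * (1 - q ^ (S m)) = Aq q m * q ^ m.
Proof. assert (E := one_minus_pow_ne q m Hq). simpl Aq. simpl pow in *. field. auto. Qed.

Lemma Bq_rec m : Bq q (S m) * (1 - q ^ (S m)) = Bq q m.
Proof. assert (E := one_minus_pow_ne q m Hq). simpl Bq. simpl pow in *. field. auto. Qed.

Lemma ES_func x : ES x = ((1 + x) * ES (RtoC q * x))%C.
Proof.
  set (u := fun n => (RtoC (Aq q n) * Cpow (RtoC q * x) n)%C).
  assert (H1 : CS u (ES (RtoC q * x))) by apply ES_spec.
  assert (H2 := CS_shift (fun n => x * u n)%C _ (CS_scal x u _ H1)).
  assert (H3 := CS_plus _ _ _ _ H1 H2).
  apply (CS_unique (fun n => RtoC (Aq q n) * Cpow x n)%C).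
  apply ES_spec.
  replace ((1 + x) * ES (RtoC q * x))%C with (ES (RtoC q * x) + x * ES (RtoC q * x))%C by ring.
  apply CS_ext with (2 := H3). intro n. unfold u. destruct n.
  - simpl. ring.
  - assert (E := Aq_rec n).
    assert (E' : RtoC (Aq q (S n)) = (RtoC (Aq q (S n)) * RtoC (q ^ S n) + RtoC (Aq q n) * RtoC (q ^ n))%C).
    { rewrite <- !RtoC_mult, <- RtoC_plus. f_equal. lra. }
    rewrite !Cpow_mult_l, <- !RtoC_pow.
    symmetry. transitivity ((RtoC (Aq q (S n)) * RtoC (q ^ S n) + RtoC (Aq q n) * RtoC (q ^ n)) * Cpow x (S n))%C.
    { rewrite <- E'. auto. }
    simpl Cpow. simpl pow. rewrite RtoC_mult. ring.
Qed.

Definition fac1 (x : C) (k : nat) : C := (1 + RtoC (q ^ k) * x)%C.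

Lemma ES_iter x N : ES x = (cprod (fac1 x) N * ES (RtoC (q ^ N) * x))%C.
Proof.
  induction N; simpl cprod.
  - simpl. replace (RtoC 1 * x)%C with x by ring. ring.
  - rewrite IHN, (ES_func (RtoC (q ^ N) * x)). unfold fac1.
    replace (RtoC q * (RtoC (q ^ N) * x))%C with (RtoC (q ^ S N) * x)%C.
    ring. simpl pow. rewrite RtoC_mult. ring.
Qed.

Lemma ES_lim0 x : filterlim (fun N => ES (RtoC (q ^ N) * x)%C) eventually (locally (T := C_UniformSpace) (RtoC 1)).
Proof.
  apply (PS_lim0 (fun n => RtoC (Aq q n)) 1 ES); try lra; auto.
  replace (fun n => Cmod (RtoC (Aq q n)) * 1 ^ n) with (fun n => Cmod (RtoC (Aq q n)) * 1 ^ n) by auto.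
  apply Aq_entire; auto; lra.
  intros; apply ES_spec.
Qed.

Lemma Euler1 x : filterlim (cprod (fac1 x)) eventually (locally (T := C_UniformSpace) (ES x)).
Proof.
  apply Clim_intro. apply eventually_filter. intros eps He.
  set (E := ES x).
  assert (HE : 0 <= Cmod E) by apply Cmod_ge_0.
  destruct (Clim_elim _ _ _ _ (ES_lim0 x) (Rmin (1/2) (eps / (2 * Cmod E + 1)))) as [N HN].
  { apply Rmin_pos. lra. apply Rdiv_lt_0_compat; lra. }
  exists N. intros n Hn. specialize (HN n Hn).
  assert (Hm1 := Rmin_l (1/2) (eps / (2 * Cmod E + 1))).
  assert (Hm2 := Rmin_r (1/2) (eps / (2 * Cmod E + 1))).
  set (u := ES (RtoC (q ^ n) * x)%C) in *. set (P := cprod (fac1 x) n).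
  assert (HP : E = (P * u)%C) by apply ES_iter.
  assert (Hu : 1/2 <= Cmod u).
  { assert (T := Cmod_rev_tri (RtoC 1) (RtoC 1 - u)%C). rewrite Cmod_R, Rabs_R1 in T.
    replace (RtoC 1 - (RtoC 1 - u))%C with u in T by ring. rewrite Cmod_sub_sym in T. lra. }
  replace (P - E)%C with (P * (RtoC 1 - u))%C by (rewrite HP; ring).
  rewrite Cmod_mult.
  assert (HPm : Cmod P * Cmod u = Cmod E) by (rewrite HP, Cmod_mult; auto).
  assert (HPb : Cmod P <= 2 * Cmod E).
  { assert (0 <= Cmod P) by apply Cmod_ge_0. nra. }
  rewrite Cmod_sub_sym.
  assert (0 <= Cmod P) by apply Cmod_ge_0.
  assert (Cmod (u - RtoC 1) * (2 * Cmod E + 1) < eps).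
  { apply Rlt_le_trans with (eps / (2 * Cmod E + 1) * (2 * Cmod E + 1)).
    apply Rmult_lt_compat_r; lra. right; field; lra. }
  assert (0 <= Cmod (u - RtoC 1)) by apply Cmod_ge_0.
  nra.
Qed.

Lemma TS_func x : Cmod x < 1 -> TS (RtoC q * x)%C = ((1 - x) * TS x)%C.
Proof.
  intro Hx.
  assert (Hqx : Cmod (RtoC q * x)%C < 1).
  { rewrite Cmod_mult, Cmod_R. assert (0 <= Cmod x) by apply Cmod_ge_0.
    assert (0 <= Rabs q) by apply Rabs_pos. nra. }
  set (u := fun n => (RtoC (Bq q n) * Cpow x n)%C).
  assert (H1 : CS u (TS x)) by (apply TS_spec; auto).
  assert (H2 := CS_shift (fun n => x * u n)%C _ (CS_scal x u _ H1)).
  assert (H3 := CS_minus _ _ _ _ H1 H2).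
  apply (CS_unique (fun n => RtoC (Bq q n) * Cpow (RtoC q * x) n)%C).
  apply TS_spec; auto.
  replace ((1 - x) * TS x)%C with (TS x - x * TS x)%C by ring.
  apply CS_ext with (2 := H3). intro n. unfold u. destruct n.
  - simpl. ring.
  - assert (E := Bq_rec n).
    assert (E' : RtoC (Bq q n) = (RtoC (Bq q (S n)) - RtoC (Bq q (S n)) * RtoC (q ^ S n))%C).
    { rewrite <- !RtoC_mult, <- RtoC_minus. f_equal. lra. }
    rewrite !Cpow_mult_l, <- !RtoC_pow. rewrite E'.
    simpl Cpow. simpl pow. rewrite RtoC_mult. ring.
Qed.

Definition fac2 (x : C) (k : nat) : C := (1 - RtoC (q ^ k) * x)%C.

Lemma TS_iter x N : Cmod x < 1 -> (TS x * cprod (fac2 x) N)%C = TS (RtoC (q ^ N) * x)%C.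
Proof.
  intro Hx. induction N; simpl cprod.
  - simpl. replace (RtoC 1 * x)%C with x by ring. ring.
  - assert (Hn : Cmod (RtoC (q ^ N) * x)%C < 1).
    { rewrite Cmod_mult, Cmod_R, <- RPow_abs. assert (0 <= Cmod x) by apply Cmod_ge_0.
      assert (Rabs q ^ N <= 1) by (rewrite <- (pow1 N); apply pow_incr; split; [apply Rabs_pos | lra]).
      assert (0 <= Rabs q ^ N) by (apply pow_le, Rabs_pos). nra. }
    replace (RtoC (q ^ S N) * x)%C with (RtoC q * (RtoC (q ^ N) * x))%C.
    2:{ simpl pow. rewrite RtoC_mult. ring. }
    rewrite TS_func by auto. rewrite <- IHN. unfold fac2. ring.
Qed.

Lemma TS_ES x : Cmod x < 1 -> (TS x * ES (- x))%C = RtoC 1.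
Proof.
  intro Hx.
  set (r := (Cmod x + 1) / 2).
  assert (Hr : Cmod x < r < 1) by (unfold r; lra).
  assert (Hr0 : 0 < r) by (assert (0 <= Cmod x) by apply Cmod_ge_0; lra).
  assert (L1 : filterlim (fun N => TS (RtoC (q ^ N) * x)%C) eventually (locally (T := C_UniformSpace) (RtoC 1))).
  { apply (PS_lim0 (fun n => RtoC (Bq q n)) r TS); auto.
    apply Bq_conv; auto; lra.
    intros y Hy. apply TS_spec. lra. }
  assert (L2 : filterlim (fun N => TS x * cprod (fac2 x) N)%C eventually (locally (T := C_UniformSpace) (TS x * ES (- x))%C)).
  { assert (H := Euler1 (- x)%C).
    apply Clim_intro. apply eventually_filter. intros eps He.
    destruct (Clim_elim _ _ _ _ H (eps / (Cmod (TS x) + 1))) as [N HN].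
    { apply Rdiv_lt_0_compat; auto. assert (0 <= Cmod (TS x)) by apply Cmod_ge_0. lra. }
    exists N. intros n Hn. specialize (HN n Hn).
    replace (TS x * cprod (fac2 x) n - TS x * ES (- x))%C with (TS x * (cprod (fac1 (- x)) n - ES (- x)))%C.
    2:{ rewrite (cprod_ext (fac1 (- x)) (fac2 x)). ring. intro k; unfold fac1, fac2; ring. }
    rewrite Cmod_mult. assert (0 <= Cmod (TS x)) by apply Cmod_ge_0.
    assert (0 <= Cmod (cprod (fac1 (- x)) n - ES (- x))) by apply Cmod_ge_0.
    apply Rle_lt_trans with ((Cmod (TS x) + 1) * Cmod (cprod (fac1 (- x)) n - ES (- x))).
    apply Rmult_le_compat_r; lra.
    apply Rlt_le_trans with ((Cmod (TS x) + 1) * (eps / (Cmod (TS x) + 1))).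
    apply Rmult_lt_compat_l; lra. right; field; lra. }
  apply (Clim_unique _ _ _ L2).
  eapply filterlim_ext; [|exact L1]. intro N. simpl. rewrite TS_iter; auto.
Qed.

Lemma ES_zero y : ES y = 0 -> exists j, fac1 y j = 0.
Proof.
  intro H. destruct (Clim_elim _ _ _ _ (ES_lim0 y) (1/2)) as [N HN]. lra.
  specialize (HN N (Nat.le_refl N)).
  rewrite (ES_iter y N) in H. apply Cmult_eq0 in H. destruct H as [H|H].
  - destruct (cprod_zero _ _ H) as [k [_ Hk]]. exists k; auto.
  - rewrite H, Cmod_sub_sym in HN. replace (RtoC 1 - 0)%C with (RtoC 1) in HN by ring.
    rewrite Cmod_1 in HN. lra.
Qed.

End Euler.

Lemma binom2_S n : binom2 (S n) = (binom2 n + n)%nat.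
Proof.
  unfold binom2. replace (S n * (S n - 1))%nat with (n * (n - 1) + n * 2)%nat.
  rewrite Nat.div_add by lia. reflexivity.
  destruct n. reflexivity. replace (S (S n) - 1)%nat with (S n) by lia.
  replace (S n - 1)%nat with n by lia. nia.
Qed.

Section Fib.
Variables s t : R.
Hypothesis Ht : t <> 0.
Hypothesis HD : s ^ 2 + 4 * t > 0.

Let r := sqrt (s ^ 2 + 4 * t).
Lemma r_pos : 0 < r.
Proof. apply sqrt_lt_R0. lra. Qed.
Lemma r_sq : r * r = s ^ 2 + 4 * t.
Proof. apply sqrt_sqrt. lra. Qed.

Lemma phi_minus : phi s t - phi' s t = r.
Proof. unfold phi, phi'. fold r. field. Qed.

Lemma phi_sq : phi s t * phi s t = s * phi s t + t.
Proof. unfold phi. fold r. assert (H := r_sq). nra. Qed.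
Lemma phi'_sq : phi' s t * phi' s t = s * phi' s t + t.
Proof. unfold phi'. fold r. assert (H := r_sq). nra. Qed.
Lemma phi_prod : phi s t * phi' s t = - t.
Proof. unfold phi, phi'. fold r. assert (H := r_sq). nra. Qed.

Lemma phi_ne : phi s t <> 0.
Proof. intro E. assert (H := phi_prod). rewrite E in H. lra. Qed.
Lemma phi'_ne : phi' s t <> 0.
Proof. intro E. assert (H := phi_prod). rewrite E in H. lra. Qed.

Lemma binet n : fibp s t n * r = phi s t ^ n - phi' s t ^ n /\
                fibp s t (S n) * r = phi s t ^ (S n) - phi' s t ^ (S n).
Proof.
  induction n.
  - simpl. rewrite <- phi_minus. split; ring.
  - destruct IHn as [H1 H2]. split; auto.
    change (fibp s t (S (S n))) with (s * fibp s t (S n) + t * fibp s t n).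
    rewrite Rmult_plus_distr_r, !Rmult_assoc, H1, H2.
    simpl pow.
    replace (phi s t * (phi s t * phi s t ^ n)) with ((phi s t * phi s t) * phi s t ^ n) by ring.
    replace (phi' s t * (phi' s t * phi' s t ^ n)) with ((phi' s t * phi' s t) * phi' s t ^ n) by ring.
    rewrite phi_sq, phi'_sq. ring.
Qed.

Lemma fibp_eq n : fibp s t n = (phi s t ^ n - phi' s t ^ n) / (phi s t - phi' s t).
Proof. rewrite phi_minus. destruct (binet n) as [H _]. assert (H0 := r_pos). rewrite <- H. field. lra. Qed.

End Fib.

Lemma ratio_gen1 (a b : R) n : a <> 0 -> a - b <> 0 -> 1 - (b / a) ^ (S n) <> 0 ->
  b ^ n / ((a ^ (S n) - b ^ (S n)) / (a - b)) = (b / a) ^ n * (1 - b / a) / (1 - (b / a) ^ (S n)).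
Proof.
  intros Ha Hab H. set (q := b / a) in *.
  assert (Eb : b = q * a) by (unfold q; field; auto). rewrite Eb in *.
  rewrite !Rpow_mult_distr. simpl pow in *.
  assert (a ^ n <> 0) by (apply pow_nonzero; auto).
  assert (1 - q <> 0) by (intro E; apply Hab; replace q with 1 by lra; ring).
  field. repeat split; auto. intro E. apply H. apply Rmult_eq_reg_r with (a * a ^ n).
  rewrite Rmult_0_l. rewrite <- E. ring. apply Rmult_integral_contrapositive_currified; auto.
Qed.

Lemma ratio_gen2 (a b : R) n : b <> 0 -> a - b <> 0 -> 1 - (a / b) ^ (S n) <> 0 ->
  b ^ n / ((a ^ (S n) - b ^ (S n)) / (a - b)) = (1 - a / b) / (1 - (a / b) ^ (S n)).
Proof.
  intros Hb Hab H. set (p := a / b) in *.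
  assert (Ea : a = p * b) by (unfold p; field; auto). rewrite Ea in *.
  rewrite !Rpow_mult_distr. simpl pow in *.
  assert (b ^ n <> 0) by (apply pow_nonzero; auto).
  assert (1 - p <> 0) by (intro E; apply Hab; replace p with 1 by lra; ring).
  field. repeat split; auto. intro E. apply H.
  assert (Hbb : b * b ^ n <> 0) by (apply Rmult_integral_contrapositive_currified; auto).
  apply Rmult_eq_reg_r with (b * b ^ n); auto. lra.
Qed.

Lemma expcoef_S s t n : fibtorial s t n <> 0 -> fibp s t (S n) <> 0 ->
  expcoef s t (S n) = expcoef s t n * (phi' s t ^ n / fibp s t (S n)).
Proof.
  intros H1 H2. unfold expcoef. rewrite binom2_S, pow_add.
  change (fibtorial s t (S n)) with (fibtorial s t n * fibp s t (S n)). field. auto.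
Qed.

Lemma fibtorial_ne s t n : (forall k, fibp s t (S k) <> 0) -> fibtorial s t n <> 0.
Proof.
  intro H. induction n. simpl. lra. change (fibtorial s t (S n)) with (fibtorial s t n * fibp s t (S n)).
  apply Rmult_integral_contrapositive_currified; auto.
Qed.

Section Coefs.
Variables s t : R.
Hypothesis Ht : t <> 0.
Hypothesis HD : s ^ 2 + 4 * t > 0.

Lemma fibp_S_ne_gen n : phi s t ^ (S n) - phi' s t ^ (S n) <> 0 -> fibp s t (S n) <> 0.
Proof.
  intros H E. rewrite fibp_eq in E; auto. rewrite phi_minus in E; auto.
  assert (Hr := r_pos s t HD). unfold Rdiv in E. apply Rmult_integral in E. destruct E as [E|E].
  auto. apply Rinv_neq_0_compat in E; auto. lra.
Qed.

Lemma coef1 : Rabs (phi' s t / phi s t) < 1 ->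
  forall n, expcoef s t n = Aq (phi' s t / phi s t) n * (1 - phi' s t / phi s t) ^ n.
Proof.
  intros Hq.
  assert (Hphi := phi_ne s t Ht HD).
  assert (Hm : phi s t - phi' s t <> 0) by (rewrite phi_minus; auto; apply Rgt_not_eq, r_pos; auto).
  assert (Hq1 : forall k, 1 - (phi' s t / phi s t) ^ S k <> 0) by (intro k; apply one_minus_pow_ne; auto).
  assert (Hf : forall k, fibp s t (S k) <> 0).
  { intro k. apply fibp_S_ne_gen.
    replace (phi' s t) with (phi' s t / phi s t * phi s t) by (field; auto).
    rewrite Rpow_mult_distr.
    replace (phi s t ^ S k - (phi' s t / phi s t) ^ S k * phi s t ^ S k) with
      (phi s t ^ S k * (1 - (phi' s t / phi s t) ^ S k)) by ring.
    apply Rmult_integral_contrapositive_currified; auto. apply pow_nonzero; auto. }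
  induction n.
  - unfold expcoef. simpl. field.
  - rewrite expcoef_S by (auto; apply fibtorial_ne; auto).
    rewrite IHn, fibp_eq, ratio_gen1; auto.
    set (q := phi' s t / phi s t) in *. specialize (Hq1 n).
    simpl Aq. simpl pow in *. field. auto.
Qed.

Lemma coef2 : Rabs (phi s t / phi' s t) < 1 ->
  forall n, expcoef s t n = Bq (phi s t / phi' s t) n * (1 - phi s t / phi' s t) ^ n.
Proof.
  intros Hq.
  assert (Hphi := phi'_ne s t Ht HD).
  assert (Hm : phi s t - phi' s t <> 0) by (rewrite phi_minus; auto; apply Rgt_not_eq, r_pos; auto).
  assert (Hq1 : forall k, 1 - (phi s t / phi' s t) ^ S k <> 0) by (intro k; apply one_minus_pow_ne; auto).
  assert (Hf : forall k, fibp s t (S k) <> 0).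
  { intro k. apply fibp_S_ne_gen.
    replace (phi s t) with (phi s t / phi' s t * phi' s t) by (field; auto).
    rewrite Rpow_mult_distr.
    replace ((phi s t / phi' s t) ^ S k * phi' s t ^ S k - phi' s t ^ S k) with
      (- (phi' s t ^ S k * (1 - (phi s t / phi' s t) ^ S k))) by ring.
    apply Ropp_neq_0_compat.
    apply Rmult_integral_contrapositive_currified; auto. apply pow_nonzero; auto. }
  induction n.
  - unfold expcoef. simpl. field.
  - rewrite expcoef_S by (auto; apply fibtorial_ne; auto).
    rewrite IHn, fibp_eq, ratio_gen2; auto.
    set (p := phi s t / phi' s t) in *. specialize (Hq1 n).
    simpl Bq. simpl pow in *. field. auto.
Qed.
End Coefs.

Definition exd (f : C -> C) (z : C) := ex_derive (K := C_AbsRing) (V := C_NormedModule) f z.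

Lemma affine_derive (a b z : C) : is_derive (K := C_AbsRing) (V := C_NormedModule) (fun w => (a + b * w)%C) z b.
Proof.
  split. apply is_linear_scal_l.
  intros x' Hx'. apply (is_filter_lim_locally_unique (K := C_AbsRing) (V := AbsRing_NormedModule C_AbsRing)) in Hx'. subst x'.
  intro eps. exists (mkposreal _ Rlt_0_1). intros y Hy. change C in y.
  change (Cmod ((a + b * y) - (a + b * z) - (y - z) * b)%C <= eps * Cmod (y - z)).
  replace ((a + b * y) - (a + b * z) - (y - z) * b)%C with (RtoC 0) by ring.
  rewrite Cmod_0. apply Rmult_le_pos. apply Rlt_le, cond_pos. apply Cmod_ge_0.
Qed.

Lemma exd_affine a b z : exd (fun w => (a + b * w)%C) z.
Proof. eexists. apply affine_derive. Qed.

Lemma exd_const a z : exd (fun _ => a) z.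
Proof. eapply ex_derive_ext with (f := fun w => (a + RtoC 0 * w)%C). intro; simpl; ring. apply exd_affine. Qed.

Lemma isd_conv1 f z l : is_derive (K := C_AbsRing) (V := C_NormedModule) f z l ->
  is_derive (K := C_AbsRing) (V := AbsRing_NormedModule C_AbsRing) f z l.
Proof. intro H. destruct H as [H1 H2]. split.
 - apply is_linear_scal_l.
 - intros x Hx eps. specialize (H2 x Hx eps). exact H2.
Qed.
Lemma isd_conv2 f z l : is_derive (K := C_AbsRing) (V := AbsRing_NormedModule C_AbsRing) f z l ->
  is_derive (K := C_AbsRing) (V := C_NormedModule) f z l.
Proof. intro H. destruct H as [H1 H2]. split.
 - apply is_linear_scal_l.
 - intros x Hx eps. specialize (H2 x Hx eps). exact H2.
Qed.

Lemma exd_mult f g z : exd f z -> exd g z -> exd (fun w => (f w * g w)%C) z.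
Proof.
  intros [df Hf] [dg Hg]. eexists.
  apply isd_conv2. apply (is_derive_mult (K := C_AbsRing) f g z df dg (isd_conv1 _ _ _ Hf) (isd_conv1 _ _ _ Hg)). intros; apply Cmult_comm.
Qed.

Lemma exd_comp f g z : exd g z -> exd f (g z) -> exd (fun w => f (g w)) z.
Proof.
  intros [dg Hg] [df Hf]. eexists. apply (is_derive_comp (K := C_AbsRing) (V := C_NormedModule) f g z df dg Hf (isd_conv1 _ _ _ Hg)).
Qed.

Lemma exd_Cinv f z : exd f z -> f z <> 0 -> exd (fun w => Cinv (f w)) z.
Proof. intros Hf Hz. apply exd_comp; auto. eexists. apply Cinv_derive; auto. Qed.

Lemma exd_PSC a z : Entire a -> exd (PSC a) z.
Proof. intro H. eexists. apply PSC_derive; auto. Qed.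

Lemma exd_Ccont f z : exd f z -> Ccont f z.
Proof. intros [l H]. eapply deriv_Ccont; eauto. Qed.

Lemma exd_cprod (F : C -> nat -> C) z N : (forall k, exd (fun w => F w k) z) -> exd (fun w => cprod (F w) N) z.
Proof.
  intro H. induction N; simpl.
  - apply exd_const.
  - apply exd_mult; auto.
Qed.

Lemma expterm_eq s t z (g : nat -> R) (k : R) :
  (forall n, expcoef s t n = g n * k ^ n) ->
  forall n, expterm s t z n = (RtoC (g n) * Cpow (RtoC k * z) n)%C.
Proof.
  intros H n. unfold expterm. rewrite H, pow_n_Cpow, Cpow_mult_l, RtoC_mult, RtoC_pow. ring.
Qed.

Lemma part1 s t : s <> 0 -> t <> 0 -> s ^ 2 + 4 * t > 0 ->
  Rabs (phi' s t / phi s t) < 1 ->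
  forall z : C, exists L : C,
    is_series (K := C_AbsRing) (V := C_NormedModule) (expterm s t z) L /\
    is_inf_prod (factor1 s t z) L.
Proof.
  intros Hs Ht HD Hq z.
  set (q := phi' s t / phi s t) in *.
  assert (Hphi := phi_ne s t Ht HD). assert (Hphi' := phi'_ne s t Ht HD).
  assert (Hq0 : q <> 0) by (unfold q, Rdiv; apply Rmult_integral_contrapositive_currified; auto; apply Rinv_neq_0_compat; auto).
  assert (Eq : phi' s t = q * phi s t) by (unfold q; field; auto).
  exists (ES q (RtoC (1 - q) * z)%C). split.
  - apply (CS_ext (fun n => RtoC (Aq q n) * Cpow (RtoC (1 - q) * z) n)%C).
    intro n. symmetry. apply expterm_eq. apply coef1; auto.
    apply ES_spec; auto.
  - unfold is_inf_prod. eapply filterlim_ext; [| apply (Euler1 q Hq Hq0)].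
    intro N. apply cprod_ext. intro k. unfold fac1, factor1.
    replace ((phi s t - phi' s t) * phi' s t ^ k / phi s t ^ S k) with (q ^ k * (1 - q)).
    rewrite RtoC_mult. ring.
    rewrite Eq, Rpow_mult_distr. simpl pow. field. split; auto. apply pow_nonzero; auto.
Qed.

Section Part2.
Variables s t : R.
Hypothesis Ht : t <> 0.
Hypothesis HD : s ^ 2 + 4 * t > 0.
Hypothesis Hp : Rabs (phi s t / phi' s t) < 1.

Let p := phi s t / phi' s t.
Let c := 1 - p.

Lemma psi_ne : phi' s t <> 0. Proof. apply phi'_ne; auto. Qed.
Lemma p_ne : p <> 0.
Proof. unfold p, Rdiv. apply Rmult_integral_contrapositive_currified. apply phi_ne; auto. apply Rinv_neq_0_compat, psi_ne. Qed.
Lemma c_ne : c <> 0.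
Proof. unfold c. intro E. assert (p = 1) by lra. fold p in Hp. rewrite H, Rabs_R1 in Hp. lra. Qed.
Lemma Ephi : phi s t = p * phi' s t.
Proof. unfold p. field. apply psi_ne. Qed.

Lemma RtoC_ne (r : R) : r <> 0 -> RtoC r <> 0.
Proof. intros H E. apply H. apply (RtoC_inj r 0). exact E. Qed.

Lemma pole_eq k : pole2 s t k = RtoC (/ (c * p ^ k)).
Proof.
  unfold pole2. f_equal. rewrite Ephi. unfold c. rewrite Rpow_mult_distr. simpl pow.
  assert (H1 := psi_ne). assert (H2 := p_ne). assert (H3 := c_ne). unfold c in H3.
  field. repeat split; auto; try (apply pow_nonzero; auto). intro E. apply H3. apply Rmult_eq_reg_r with (phi' s t); auto. lra.
Qed.

Lemma factor2_eq z k : factor2 s t z k = Cinv (fac1 p (- (RtoC c * z))%C k).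
Proof.
  unfold factor2, fac1.
  set (a := phi' s t ^ S k).
  assert (Ha : a <> 0) by (apply pow_nonzero, psi_ne).
  assert (Eb : (phi s t - phi' s t) * phi s t ^ k = - (a * (p ^ k * c))).
  { unfold a, c. rewrite Ephi, Rpow_mult_distr. simpl pow. ring. }
  rewrite Eb.
  replace (RtoC a + RtoC (- (a * (p ^ k * c))) * z)%C with (RtoC a * (1 + RtoC (p ^ k) * - (RtoC c * z)))%C.
  2:{ rewrite RtoC_opp, !RtoC_mult. ring. }
  unfold Cdiv. rewrite Cinv_mult. rewrite Cmult_assoc, Cinv_r. ring. apply RtoC_ne; auto.
Qed.

Lemma Hp' : Rabs p < 1. Proof. exact Hp. Qed.

Definition G (w : C) : C := ES p (- (RtoC c * w))%C.
Definition F (w : C) : C := Cinv (G w).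

Lemma prod_lemma z : G z <> 0 -> is_inf_prod (factor2 s t z) (F z).
Proof.
  intro HG. unfold is_inf_prod, F.
  eapply filterlim_ext.
  2:{ apply (Ccont_seq Cinv (G z)). apply exd_Ccont. eexists. apply Cinv_derive; auto.
      apply Euler1. apply Hp'. apply p_ne. }
  intro N. simpl. rewrite <- cprod_inv. apply cprod_ext. intro k. rewrite factor2_eq. auto.
Qed.

Lemma disk_lemma z : Cmod (RtoC c * z)%C < 1 ->
  G z <> 0 /\ is_series (K := C_AbsRing) (V := C_NormedModule) (expterm s t z) (F z).
Proof.
  intro Hz.
  assert (HT := TS_ES p Hp' p_ne (RtoC c * z)%C Hz).
  assert (HG : G z <> 0).
  { intro E. unfold G in E. rewrite E, Cmult_0_r in HT. apply (RtoC_ne 1); auto. }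
  split; auto.
  assert (ET : TS p (RtoC c * z)%C = F z).
  { unfold F. rewrite <- (Cmult_1_r (TS p _)). rewrite <- (Cinv_r (G z)) by auto.
    rewrite Cmult_assoc. unfold G. rewrite HT. ring. }
  rewrite <- ET.
  apply (CS_ext (fun n => RtoC (Bq p n) * Cpow (RtoC c * z) n)%C).
  intro n. symmetry. apply expterm_eq. apply coef2; auto.
  apply TS_spec; auto.
Qed.

Lemma Bq_prod n : (RtoC (Bq p n) * cprod (fac1 p (RtoC (- p))) n)%C = RtoC 1.
Proof.
  induction n.
  - simpl. ring.
  - simpl cprod. unfold fac1 at 2.
    replace (RtoC 1 + RtoC (p ^ n) * RtoC (- p))%C with (RtoC (1 - p ^ S n)).
    2:{ rewrite <- RtoC_mult, <- RtoC_plus. f_equal. simpl. ring. }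
    rewrite <- IHn. rewrite <- (Bq_rec p Hp' n). rewrite RtoC_mult. ring.
Qed.

Lemma radius_lemma z : Rbar_lt (Finite (Cmod z)) (CV_radius (expcoef s t)) -> Cmod (RtoC c * z)%C < 1.
Proof.
  intro Hr. set (x := Cmod z).
  assert (Hx0 : 0 <= x) by apply Cmod_ge_0.
  assert (H1 : ex_pseries (expcoef s t) x).
  { apply CV_radius_inside. rewrite Rabs_pos_eq; auto. }
  assert (H2 := ex_series_lim_0 _ H1).
  assert (H3 : is_lim_seq (fun n => x ^ n * expcoef s t n) 0).
  { eapply is_lim_seq_ext; [|exact H2]. intro n. simpl. rewrite pow_n_pow. auto. }
  apply Rnot_le_lt. intro Hge. rewrite Cmod_mult, Cmod_R in Hge. fold x in Hge.
  set (E := ES p (RtoC (- p))).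
  assert (HE : 0 <= Cmod E) by apply Cmod_ge_0.
  destruct (Clim_elim _ _ _ _ (Euler1 p Hp' p_ne (RtoC (- p))) 1 Rlt_0_1) as [N1 HN1].
  apply is_lim_seq_spec in H3.
  assert (Hd : 0 < 1 / (Cmod E + 1)) by (apply Rdiv_lt_0_compat; lra).
  destruct (H3 (mkposreal _ Hd)) as [N2 HN2].
  specialize (HN1 (N1 + N2)%nat ltac:(lia)). specialize (HN2 (N1 + N2)%nat ltac:(lia)).
  simpl in HN2. rewrite Rminus_0_r in HN2.
  set (n := (N1 + N2)%nat) in *.
  assert (HB := Bq_prod n).
  set (P := cprod (fac1 p (RtoC (- p))) n) in *.
  assert (HP : Cmod P <= Cmod E + 1).
  { assert (T := Cmod_triangle (P - E)%C E). replace (P - E + E)%C with P in T by ring. fold E in HN1. lra. }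
  assert (Hb : Rabs (Bq p n) <= Rabs (x ^ n * expcoef s t n)).
  { rewrite (coef2 s t Ht HD Hp n). fold p. fold c.
    replace (x ^ n * (Bq p n * c ^ n)) with (Bq p n * (c * x) ^ n) by (rewrite Rpow_mult_distr; ring).
    rewrite Rabs_mult. rewrite <- (Rmult_1_r (Rabs (Bq p n))) at 1.
    apply Rmult_le_compat_l. apply Rabs_pos.
    rewrite <- RPow_abs, Rabs_mult, (Rabs_pos_eq x) by auto. apply pow_R1_Rle. lra. }
  assert (Hone : Rabs (Bq p n) * Cmod P = 1).
  { rewrite <- Cmod_R, <- Cmod_mult, HB, Cmod_1. auto. }
  assert (0 <= Cmod P) by apply Cmod_ge_0.
  assert (0 <= Rabs (Bq p n)) by apply Rabs_pos.
  assert (Rabs (Bq p n) * (Cmod E + 1) < 1).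
  { apply Rle_lt_trans with (Rabs (x ^ n * expcoef s t n) * (Cmod E + 1)).
    apply Rmult_le_compat_r; lra.
    apply Rlt_le_trans with (1 / (Cmod E + 1) * (Cmod E + 1)). apply Rmult_lt_compat_r; lra.
    right; field; lra. }
  nra.
Qed.

Lemma G_exd z : exd G z.
Proof.
  apply (ex_derive_ext (fun w => ES p (RtoC 0 + (- RtoC c) * w)%C)).
  intro w. unfold G. f_equal. ring.
  apply (exd_comp (ES p) (fun w => (RtoC 0 + (- RtoC c) * w)%C)).
  apply exd_affine. apply exd_PSC. apply Aq_entire. apply Hp'. apply p_ne.
Qed.

Lemma F_exd z : G z <> 0 -> exd F z.
Proof. intro H. apply exd_Cinv; auto. apply G_exd. Qed.

Lemma pow_p_ne k : p ^ k <> 0. Proof. apply pow_nonzero, p_ne. Qed.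
Lemma cpk_ne k : c * p ^ k <> 0.
Proof. apply Rmult_integral_contrapositive_currified. apply c_ne. apply pow_p_ne. Qed.

Lemma fac1_zero_pole z j : fac1 p (- (RtoC c * z))%C j = 0 -> z = pole2 s t j.
Proof.
  intro H. unfold fac1 in H. rewrite pole_eq.
  assert (H1 : (RtoC (c * p ^ j) * z)%C = RtoC 1).
  { rewrite RtoC_mult. replace (RtoC 1) with (RtoC 1 + RtoC (p ^ j) * - (RtoC c * z) + RtoC c * RtoC (p ^ j) * z)%C by ring.
    rewrite H. ring. }
  rewrite RtoC_inv by apply cpk_ne.
  rewrite <- (Cmult_1_l z). rewrite <- (Cinv_l (RtoC (c * p ^ j))) by (apply RtoC_ne, cpk_ne).
  rewrite <- Cmult_assoc, H1. ring.
Qed.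

Lemma G_ne z : (forall k, z <> pole2 s t k) -> G z <> 0.
Proof.
  intros Hz E. destruct (ES_zero p Hp' p_ne _ E) as [j Hj].
  apply (Hz j). apply fac1_zero_pole. exact Hj.
Qed.

Lemma finite_eps (P : nat -> Prop) (g : nat -> R) K : (forall k, P k \/ 0 < g k) ->
  exists eps, 0 < eps /\ forall k, (k < K)%nat -> P k \/ eps <= g k.
Proof.
  intro H. induction K.
  - exists 1. split. lra. intros; lia.
  - destruct IHK as [e [He Hk]]. destruct (H K) as [HP|Hg].
    + exists e. split; auto. intros k Hk'. destruct (Nat.eq_dec k K). subst; auto. apply Hk; lia.
    + exists (Rmin e (g K)). split. apply Rmin_pos; auto. intros k Hk'.
      destruct (Nat.eq_dec k K). subst. right. apply Rmin_r.
      destruct (Hk k ltac:(lia)) as [|Hl]; auto. right. eapply Rle_trans; [apply Rmin_l|]; auto.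
Qed.

Lemma Cmod_pole k : Cmod (pole2 s t k) = / (Rabs c * Rabs p ^ k).
Proof.
  rewrite pole_eq, Cmod_R, Rabs_inv, Rabs_mult, RPow_abs. auto.
Qed.

Lemma discrete z : exists eps : R, eps > 0 /\
  forall k, pole2 s t k = z \/ Cmod (Cminus (pole2 s t k) z) >= eps.
Proof.
  assert (Hc : 0 < Rabs c) by (apply Rabs_pos_lt, c_ne).
  assert (Hz : 0 <= Cmod z) by apply Cmod_ge_0.
  destruct (geom_small p (Rabs c * (Cmod z + 1)) 1 Hp' Rlt_0_1) as [K HK].
  { apply Rmult_le_pos; lra. }
  destruct (finite_eps (fun k => pole2 s t k = z) (fun k => Cmod (pole2 s t k - z)%C) K) as [e [He Hk]].
  { intro k. destruct (Ceq_dec (pole2 s t k) z) as [E|E]. left; auto. right.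
    apply Cmod_pos_ne. intro E'. apply E. replace (pole2 s t k) with ((pole2 s t k - z) + z)%C by ring.
    rewrite E'. ring. }
  exists (Rmin e 1). split. apply Rmin_pos; lra.
  intro k. destruct (Compare_dec.lt_dec k K) as [Hlt|Hge].
  - destruct (Hk k Hlt) as [|Hl]; auto. right. apply Rle_ge. eapply Rle_trans; [apply Rmin_l|]; auto.
  - right. apply Rle_ge. eapply Rle_trans; [apply Rmin_r|].
    specialize (HK k ltac:(lia)).
    assert (T := Cmod_rev_tri (pole2 s t k) z). rewrite Cmod_pole in T.
    assert (Hpk : 0 < Rabs p ^ k) by (apply pow_lt, Rabs_pos_lt, p_ne).
    assert (Cmod z + 1 < / (Rabs c * Rabs p ^ k)).
    { apply Rmult_lt_reg_r with (Rabs c * Rabs p ^ k). nra.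
      rewrite Rinv_l by nra. nra. }
    lra.
Qed.

Lemma pole_inj j k : pole2 s t j = pole2 s t k -> j = k.
Proof.
  rewrite !pole_eq. intro E. apply RtoC_inj in E.
  assert (E2 : c * p ^ j = c * p ^ k).
  { rewrite <- (Rinv_inv (c * p ^ j)), E, Rinv_inv. auto. }
  apply Rmult_eq_reg_l in E2; [|apply c_ne].
  assert (Hgen : forall a b, (a < b)%nat -> p ^ a = p ^ b -> False).
  { intros a b Hab Eab. replace b with (a + S (b - a - 1))%nat in Eab by lia.
    rewrite pow_add in Eab.
    assert (Hpa := pow_nonzero p a p_ne).
    assert (p ^ S (b - a - 1) = 1).
    { apply Rmult_eq_reg_l with (p ^ a); auto. rewrite <- Eab. ring. }
    assert (Hl := pow_abs_lt1 p (b - a - 1) Hp'). rewrite H, Rabs_R1 in Hl. lra. }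
  destruct (Compare_dec.lt_eq_lt_dec j k) as [[Hjk|Hjk]|Hjk]; auto.
  - exfalso. apply (Hgen j k); auto.
  - exfalso. apply (Hgen k j); auto.
Qed.

Section Pole.
Variable k : nat.
Let P0 := pole2 s t k.
Definition Hf (w : C) : C :=
  (- RtoC (c * p ^ k) * cprod (fac1 p (- (RtoC c * w))%C) k * ES p (RtoC (p ^ S k) * - (RtoC c * w))%C)%C.

Lemma cP0 : (RtoC (c * p ^ k) * P0)%C = RtoC 1.
Proof. unfold P0. rewrite pole_eq, <- RtoC_mult. f_equal. field. split; [apply pow_p_ne | apply c_ne]. Qed.

Lemma G_split w : G w = ((w - P0) * Hf w)%C.
Proof.
  unfold G, Hf. rewrite (ES_iter p Hp' p_ne _ (S k)). simpl cprod. unfold fac1 at 2.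
  assert (E := cP0).
  replace (RtoC 1 + RtoC (p ^ k) * - (RtoC c * w))%C with (- RtoC (c * p ^ k) * (w - P0))%C.
  ring. rewrite RtoC_mult in *. 
  replace (RtoC 1) with (RtoC c * RtoC (p ^ k) * P0)%C by (rewrite <- E; ring). ring.
Qed.

Lemma Hf_exd w : exd Hf w.
Proof.
  unfold Hf. apply exd_mult. apply exd_mult. apply exd_const.
  apply exd_cprod. intro j. unfold fac1.
  apply (ex_derive_ext (fun w => (RtoC 1 + (- (RtoC (p ^ j) * RtoC c)) * w)%C)). intro x. change (@eq C (1 + - (RtoC (p ^ j) * RtoC c) * x)%C (1 + RtoC (p ^ j) * - (RtoC c * x))%C). ring.
  apply exd_affine.
  apply (ex_derive_ext (fun w => ES p (RtoC 0 + (- (RtoC (p ^ S k) * RtoC c)) * w)%C)).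
  intro w'. f_equal. ring.
  apply (exd_comp (ES p) (fun w => (RtoC 0 + (- (RtoC (p ^ S k) * RtoC c)) * w)%C)).
  apply exd_affine. apply exd_PSC. apply Aq_entire. apply Hp'. apply p_ne.
Qed.

Lemma Hf_ne : Hf P0 <> 0.
Proof.
  unfold Hf. intro E. apply Cmult_eq0 in E. destruct E as [E|E].
  - apply Cmult_eq0 in E. destruct E as [E|E].
    + apply (RtoC_ne _ (cpk_ne k)). replace (RtoC (c * p ^ k)) with (- (- RtoC (c * p ^ k)))%C by ring. rewrite E. ring.
    + destruct (cprod_zero _ _ E) as [j [Hj Hz]]. apply fac1_zero_pole in Hz.
      apply pole_inj in Hz. lia.
  - replace (RtoC (p ^ S k) * - (RtoC c * P0))%C with (RtoC (- p)) in E.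
    + destruct (ES_zero p Hp' p_ne _ E) as [j Hj]. unfold fac1 in Hj.
      rewrite <- RtoC_mult, <- RtoC_plus in Hj. apply RtoC_inj in Hj.
      assert (Hl := pow_abs_lt1 p j Hp').
      replace (p ^ S j) with 1 in Hl by (simpl; lra). rewrite Rabs_R1 in Hl. lra.
    + assert (E1 := cP0). rewrite RtoC_mult in E1.
      replace (RtoC (p ^ S k)) with (RtoC p * RtoC (p ^ k))%C by (rewrite <- RtoC_mult; auto).
      replace (RtoC p * RtoC (p ^ k) * - (RtoC c * P0))%C with (- RtoC p * (RtoC c * RtoC (p ^ k) * P0))%C by ring.
      rewrite E1, RtoC_opp. ring.
Qed.

Lemma pole_limit : exists (m : nat) (l : C),
  filterlim (fun w : C => Cmult (pow_n (K := C_Ring) (Cminus w P0) m) (F w))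
    (locally' (T := C_UniformSpace) P0) (locally (T := C_UniformSpace) l).
Proof.
  exists 1%nat, (Cinv (Hf P0)).
  assert (Hc : Ccont (fun w => Cinv (Hf w)) P0).
  { apply exd_Ccont. apply exd_Cinv. apply Hf_exd. apply Hf_ne. }
  apply Clim_intro. apply locally'_filter. intros eps He.
  destruct (Hc eps He) as [del [Hdel Hd]].
  unfold locally', within. apply (locally_le_locally_norm (K := C_AbsRing) (V := C_NormedModule)).
  exists (mkposreal _ Hdel). intros w Hw Hne. change C in w. change (Cmod (w - P0) < del) in Hw.
  rewrite pow_n_Cpow. unfold F. rewrite G_split, Cinv_mult.
  replace ((w - P0) ^ 1 * (Cinv (w - P0) * Cinv (Hf w)))%C with (Cinv (Hf w)).
  apply Hd; auto.
  simpl Cpow. rewrite Cmult_1_r, Cmult_assoc, Cinv_r. ring.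
  intro E. apply Hne. apply (proj2 (Ceq_minus w P0)). exact E.
Qed.
End Pole.
End Part2.

Theorem mainTheorem10 (s t : R) :
  s <> 0 -> t <> 0 -> s ^ 2 + 4 * t > 0 ->
  (* (1) |q| < 1 *)
  (Rabs (phi' s t / phi s t) < 1 ->
     forall z : C, exists L : C,
       is_series (K := C_AbsRing) (V := C_NormedModule) (expterm s t z) L /\
       is_inf_prod (factor1 s t z) L) /\
  (* (2) |q| > 1 *)
  (Rabs (phi' s t / phi s t) > 1 ->
     (* on the disk of convergence of the series, Exp' equals the product *)
     (forall z : C, Rbar_lt (Finite (Cmod z)) (CV_radius (expcoef s t)) ->
        exists L : C,
          is_series (K := C_AbsRing) (V := C_NormedModule) (expterm s t z) L /\
          is_inf_prod (factor2 s t z) L) /\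
     (* and the product gives the meromorphic continuation of Exp' to C *)
     (exists F : C -> C,
        (forall z : C, Rbar_lt (Finite (Cmod z)) (CV_radius (expcoef s t)) ->
           is_series (K := C_AbsRing) (V := C_NormedModule) (expterm s t z) (F z)) /\
        (forall z : C, (forall k, z <> pole2 s t k) ->
           is_inf_prod (factor2 s t z) (F z)) /\
        (forall z : C, (forall k, z <> pole2 s t k) ->
           ex_derive (K := C_AbsRing) (V := C_NormedModule) F z) /\
        (forall z : C, exists eps : R, eps > 0 /\
           forall k, pole2 s t k = z \/ Cmod (Cminus (pole2 s t k) z) >= eps) /\
        (forall k : nat, exists (m : nat) (l : C),
           filterlim (fun w : C => Cmult (pow_n (K := C_Ring) (Cminus w (pole2 s t k)) m) (F w))
             (locally' (T := C_UniformSpace) (pole2 s t k))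
             (locally (T := C_UniformSpace) l)))).
Proof.
  intros Hs Ht HD. split.
  - intro Hq. apply part1; auto.
  - intro Hq.
    assert (Hp : Rabs (phi s t / phi' s t) < 1).
    { assert (H0 : phi s t <> 0) by (apply phi_ne; auto).
      assert (H1 : phi' s t <> 0) by (apply phi'_ne; auto).
      replace (phi s t / phi' s t) with (/ (phi' s t / phi s t)) by (field; auto).
      rewrite Rabs_inv. rewrite <- Rinv_1. apply Rinv_lt_contravar; lra. }
    split.
    + intros z Hz. exists (F s t z).
      destruct (disk_lemma s t Ht HD Hp z (radius_lemma s t Ht HD Hp z Hz)) as [HG HS].
      split; auto. apply prod_lemma; auto.
    + exists (F s t). split; [|split; [|split; [|split]]].
      * intros z Hz. apply (disk_lemma s t Ht HD Hp z (radius_lemma s t Ht HD Hp z Hz)).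
      * intros z Hz. apply prod_lemma; auto. apply G_ne; auto.
      * intros z Hz. apply F_exd; auto. apply G_ne; auto.
      * intro z. apply discrete; auto.
      * intro k. apply pole_limit; auto.
Qed.
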